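(* Let $G$ be a directed graph with vertices $s,t$ and $k\ge1$. For any $C_1,C_2\in L^*$ and any $e\in E(G)$, we have $B_e(C_1\vee C_2)+B_e(C_1\wedge C_2)\le B_e(C_1)+B_e(C_2)$, where $B_e(C)=\binom{\mu_e(C)}{2}$.
   Context: An $s$-$t$ cut of a directed graph $G$ is a set $X\subseteq E(G)$ such that removing $X$ leaves no directed $s$-$t$ path; $\Gamma_G(s,t)$ is the set of $s$-$t$ cuts of minimum cardinality. Fix a maximum-size collection $\mathcal P$ of pairwise edge-disjoint directed $s$-$t$ paths (each minimum $s$-$t$ cut contains exactly one edge of each path in $\mathcal P$). For $X,Y\in\Gamma_G(s,t)$, $S_{\min}(X\cup Y)$ (resp. $S_{\max}(X\cup Y)$) consists, for each $p\in\mathcal P$, of the edge of $(X\cup Y)\cap p$ occurring first (resp. last) along $p$. $X\le Y$ means every directed $s$-$t$ path meets an edge of $X$ at or before an edge of $Y$. $U^k_{\mathrm{lr}}$ is the set of $k$-tuples $[X_1,\dots,X_k]$ of elements of $\Gamma_G(s,t)$ with $X_i\le X_j$ for all $i<j$. $L^*$ is the lattice on $U^k_{\mathrm{lr}}$ with componentwise order, join $[X_i]_i\vee[Y_i]_i=[S_{\max}(X_i\cup Y_i)]_i$ and meet $[X_i]_i\wedge[Y_i]_i=[S_{\min}(X_i\cup Y_i)]_i$. For $C=[X_1,\dots,X_k]$, $\mu_e(C)$ is the number of indices $i$ with $e\in X_i$. *)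

(* Defs.v *)
From mathcomp Require Import all_boot.
Set Implicit Arguments. Unset Strict Implicit. Unset Printing Implicit Defensive.

Section Cuts.
Variables (V E : finType) (src dst : E -> V).

Fixpoint walk (x t : V) (p : seq E) : bool :=
  match p with
  | [::] => x == t
  | e :: q => (src e == x) && walk (dst e) t q
  end.

Definition st_path (s t : V) (p : seq E) : bool :=
  walk s t p && uniq (s :: map dst p).

Definition is_cut (s t : V) (X : {set E}) : Prop :=
  forall p, st_path s t p -> has (fun e => e \in X) p.

Definition min_cut (s t : V) (X : {set E}) : Prop :=
  is_cut s t X /\ forall Y : {set E}, is_cut s t Y -> #|X| <= #|Y|.

Definition disjoint_paths (s t : V) (P : seq (seq E)) : Prop :=
  all (st_path s t) P /\
  pairwise (fun p q => ~~ has (fun e => e \in q) p) P.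

Definition max_disjoint_paths (s t : V) (P : seq (seq E)) : Prop :=
  disjoint_paths s t P /\
  forall Q, disjoint_paths s t Q -> size Q <= size P.

Definition first_in (A : {set E}) (p : seq E) (e : E) : bool :=
  [&& e \in p, e \in A & ~~ has (fun f => f \in A) (take (index e p) p)].
Definition last_in (A : {set E}) (p : seq E) (e : E) : bool :=
  [&& e \in p, e \in A & ~~ has (fun f => f \in A) (drop (index e p).+1 p)].

Definition Smin (P : seq (seq E)) (A : {set E}) : {set E} :=
  [set e | has (fun p => first_in A p e) P].
Definition Smax (P : seq (seq E)) (A : {set E}) : {set E} :=
  [set e | has (fun p => last_in A p e) P].

Definition cut_le (s t : V) (X Y : {set E}) : Prop :=
  forall p, st_path s t p ->
    exists x y, [/\ x \in X, y \in Y, x \in p, y \in p & index x p <= index y p].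

Definition U_lr (s t : V) (k : nat) (C : 'I_k -> {set E}) : Prop :=
  (forall i, min_cut s t (C i)) /\
  (forall i j : 'I_k, i < j -> cut_le s t (C i) (C j)).

Definition Ljoin (P : seq (seq E)) (k : nat) (C1 C2 : 'I_k -> {set E}) :
  'I_k -> {set E} := fun i => Smax P (C1 i :|: C2 i).
Definition Lmeet (P : seq (seq E)) (k : nat) (C1 C2 : 'I_k -> {set E}) :
  'I_k -> {set E} := fun i => Smin P (C1 i :|: C2 i).

Definition mu (k : nat) (e : E) (C : 'I_k -> {set E}) : nat :=
  #|[set i : 'I_k | e \in C i]|.
Definition Be (k : nat) (e : E) (C : 'I_k -> {set E}) : nat := 'C(mu e C, 2).

End Cuts.

(* Main.v *)
Require Import Defs.
From mathcomp Require Import all_boot.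
From mathcomp Require Import zify.
Set Implicit Arguments. Unset Strict Implicit. Unset Printing Implicit Defensive.

Ltac slia := repeat match goal with
  | H : ?T |- _ => lazymatch T with
                   | @eq nat _ _ => fail
                   | is_true (leq _ _) => fail
                   | _ => lazymatch type of T with Prop => clear H end end
  end; lia.


Lemma bin2_dbl n : 'C(n, 2) * 2 = n * n.-1.
Proof.
elim: n => [|n IH] //; rewrite binS bin1 mulnDl IH; case: n {IH} => //= n; nia.
Qed.

Lemma bin2_conv c u w : 'C(c + u, 2) + 'C(c + w, 2) <= 'C(c, 2) + 'C(c + u + w, 2).
Proof.
rewrite -(leq_pmul2r (isT : 0 < 2)) !mulnDl !bin2_dbl.
case: c => [|c] /=; first by case: u => [|u]; case: w => [|w] /=; nia.
rewrite !addSn /=; nia.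
Qed.

Lemma bin2_arith lb la ha hb : lb <= la -> la <= ha -> ha <= hb ->
  'C(ha - lb, 2) + 'C(hb - la, 2) <= 'C(ha - la, 2) + 'C(hb - lb, 2).
Proof.
move=> h1 h2 h3.
have := bin2_conv (ha - la) (la - lb) (hb - ha).
have -> : ha - la + (la - lb) + (hb - ha) = hb - lb by lia.
have -> : ha - la + (la - lb) = ha - lb by lia.
have -> : ha - la + (hb - ha) = hb - la by lia.
done.
Qed.

Lemma cardsD_sub (I : finType) (A B : {set I}) : B \subset A -> #|A :\: B| = #|A| - #|B|.
Proof. by move=> BA; rewrite cardsD (setIidPr BA). Qed.

Lemma key (I : finType) (Ha La Hb Lb : {set I}) :
  La \subset Ha -> Lb \subset Hb -> (Ha \subset Hb) || (Hb \subset Ha) ->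
  (La \subset Lb) || (Lb \subset La) ->
  'C(#|(Ha :&: Hb) :\: (La :&: Lb)|, 2) + 'C(#|(Ha :|: Hb) :\: (La :|: Lb)|, 2) <=
  'C(#|Ha :\: La|, 2) + 'C(#|Hb :\: Lb|, 2).
Proof.
move=> sa sb /orP [hab|hba] /orP [lab|lba].
- by rewrite (setIidPl hab) (setIidPl lab) (setUidPr hab) (setUidPr lab).
- rewrite (setIidPl hab) (setIidPr lba) (setUidPr hab) (setUidPl lba).
  have s1 : Lb \subset Ha := subset_trans lba sa.
  have s2 : La \subset Hb := subset_trans sa hab.
  rewrite !cardsD_sub //.
  apply: bin2_arith; exact: subset_leq_card.
- rewrite (setIidPr hba) (setIidPl lab) (setUidPl hba) (setUidPr lab).
  have s1 : La \subset Hb := subset_trans lab sb.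
  have s2 : Lb \subset Ha := subset_trans sb hba.
  rewrite !cardsD_sub // [X in _ <= X]addnC.
  apply: bin2_arith; exact: subset_leq_card.
- by rewrite (setIidPr hba) (setIidPr lba) (setUidPl hba) (setUidPl lba) addnC.
Qed.

Lemma nested_dc k (A B : {set 'I_k}) :
  (forall i j : 'I_k, i <= j -> j \in A -> i \in A) ->
  (forall i j : 'I_k, i <= j -> j \in B -> i \in B) ->
  (A \subset B) || (B \subset A).
Proof.
move=> dA dB; case: (boolP (A \subset B)) => //= /subsetPn [i iA iB].
apply/subsetP => j jB; case: (leqP j i) => ji; first exact: dA ji iA.
by case/negP: iB; apply: dB jB; apply: ltnW.
Qed.

Section Menger.
Variables (V E : finType) (src dst : E -> V).

Definition outc (F : {set E}) v := #|[set e in F | src e == v]|.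
Definition inc (F : {set E}) v := #|[set e in F | dst e == v]|.

Lemma walk_last x t p : walk src dst x t p -> t = last x (map dst p).
Proof.
elim: p x => [|e p IH] x /=; first by move/eqP.
by case/andP=> _ /IH.
Qed.

Lemma card_cons_pred (P : pred E) e q : e \notin q ->
  #|[set f | (f \in e :: q) && P f]| = P e + #|[set f | (f \in q) && P f]|.
Proof.
move=> Nq; rewrite (cardsD1 e) inE mem_head /=; congr (_ + _).
apply: eq_card => f; rewrite !inE.
by case: (eqVneq f e) => [->|] //=; rewrite (negbTE Nq).
Qed.

Lemma cnt_path t v : forall p x, walk src dst x t p -> uniq (x :: map dst p) ->
  #|[set e | (e \in p) && (src e == v)]| = ((v \in x :: map dst p) && (v != t)) /\
  #|[set e | (e \in p) && (dst e == v)]| = (v \in map dst p).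
Proof.
elim=> [|e q IH] x /=.
  move=> /eqP -> _; split; last by apply: eq_card0 => f; rewrite inE.
  by rewrite inE; case: eqP => //= _; apply: eq_card0 => f; rewrite inE.
case/andP=> /eqP sx wq /andP [xN uq].
have eq' : e \notin q.
  apply/negP => Heq; move: uq => /= /andP [H _]; case/negP: H; exact: map_f.
have [IH1 IH2] := IH _ wq uq.
rewrite !card_cons_pred // IH1 IH2; split; last first.
  rewrite inE; case: (eqVneq v (dst e)) => [->|]; last by [].
  by move: uq => /andP [/negbTE -> _].
have xt : x != t.
  apply/negP => /eqP xt; move: xN; rewrite xt (walk_last wq).
  by rewrite -/(last _ _) mem_last.
rewrite sx in_cons [x == v]eq_sym; case: (eqVneq v x) => [->|] /=; last by move=> H; rewrite in_cons (negbTE H).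
by rewrite in_cons eqxx xt; move: xN; rewrite -in_cons => /negbTE ->.
Qed.

Definition FP (P : seq (seq E)) : {set E} := [set e | has (fun p => e \in p) P].
Definition isflow s t (F : {set E}) n := forall v, v != t -> outc F v = inc F v + (v == s) * n.

Lemma card_split (Q : pred E) p P' : all (fun q => ~~ has (fun e => e \in q) p) P' ->
  #|[set e in FP (p :: P') | Q e]| =
  #|[set e | (e \in p) && Q e]| + #|[set e in FP P' | Q e]|.
Proof.
move=> dis.
have -> : [set e in FP (p :: P') | Q e] =
   [set e | (e \in p) && Q e] :|: [set e in FP P' | Q e].
  by apply/setP => e; rewrite !inE /= andb_orl.
rewrite cardsU.
have -> : [set e | (e \in p) && Q e] :&: [set e in FP P' | Q e] = set0.
  apply/setP => e; rewrite !inE.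
  apply/negP => /andP [/andP [ep _] /andP [/hasP [q qP eq] _]].
  move/allP: dis => /(_ q qP) /hasP; apply; by exists e.
by rewrite cards0 subn0.
Qed.

Lemma flow_paths s t P : s != t -> disjoint_paths src dst s t P -> isflow s t (FP P) (size P).
Proof.
move=> st; elim: P => [|p P IH] [/= Hall Hpw] v vt.
  rewrite muln0 addn0 /outc /inc; rewrite !(@eq_card0 _ [set e in FP [::] | _]) //.
    by move=> e; rewrite !inE.
  by move=> e; rewrite !inE.
move: Hall => /andP [/andP [wp up] Hall]; move: Hpw => /andP [dis Hpw].
have := IH (conj Hall Hpw) v vt.
rewrite /outc /inc !card_split // => ->.
have [c1 c2] := cnt_path v wp up.
rewrite c1 c2 vt andbT.
case: (eqVneq v s) => [->|vs] /=.
  rewrite mem_head /=; move: up => /= /andP [/negbTE -> _]; slia.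
rewrite in_cons (negbTE vs) /=; slia.
Qed.

Definition relF (F : {set E}) : rel V := fun u w => [exists e in F, (src e == u) && (dst e == w)].

Lemma vpath_to_epath F : forall vs x, path (relF F) x vs ->
  exists p, [/\ walk src dst x (last x vs) p, map dst p = vs & all (fun e => e \in F) p].
Proof.
elim=> [|w vs IH] x /=; first by exists [::]; rewrite /= eqxx.
case/andP=> /existsP [e /and3P [eF /eqP sx /eqP dw]] /IH [p [wp mp ap]].
exists (e :: p); rewrite /= sx dw eqxx wp mp eF ap; split=> //.
Qed.

Lemma sum_outc F (R : {set V}) : \sum_(v in R) outc F v = #|[set e in F | src e \in R]|.
Proof.
rewrite -sum1dep_card (partition_big src (fun v => v \in R)) /=; last first.
  by move=> e /andP [].
apply: eq_bigr => v vR; rewrite /outc -sum1dep_card; apply: eq_bigl => e.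
case E1: (src e == v); rewrite ?andbF ?andbT //; by move/eqP: E1 => ->; rewrite vR andbT.
Qed.

Lemma sum_inc F (R : {set V}) : \sum_(v in R) inc F v = #|[set e in F | dst e \in R]|.
Proof.
rewrite -sum1dep_card (partition_big dst (fun v => v \in R)) /=; last first.
  by move=> e /andP [].
apply: eq_bigr => v vR; rewrite /inc -sum1dep_card; apply: eq_bigl => e.
case E1: (dst e == v); rewrite ?andbF ?andbT //; by move/eqP: E1 => ->; rewrite vR andbT.
Qed.

Lemma sum_flow s t F n (R : {set V}) : isflow s t F n -> s \in R -> t \notin R ->
  #|[set e in F | src e \in R]| = #|[set e in F | dst e \in R]| + n.
Proof.
move=> fl sR tR; rewrite -sum_outc -sum_inc.
rewrite (eq_bigr (fun v => inc F v + (v == s) * n)); last first.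
  by move=> v vR; apply: fl; apply: contraNneq tR => <-.
rewrite big_split /=; congr (_ + _).
rewrite (bigD1 s) //= eqxx mul1n big1 ?addn0 // => v /andP [_ /negbTE ->].
by rewrite mul0n.
Qed.


Lemma outc_split (F : {set E}) (p : seq E) v : {subset p <= F} ->
  outc F v = outc (F :\: [set e | e \in p]) v + #|[set e | (e \in p) && (src e == v)]| /\
  inc F v = inc (F :\: [set e | e \in p]) v + #|[set e | (e \in p) && (dst e == v)]|.
Proof.
move=> sub; rewrite /outc /inc; split.
  rewrite -(cardsID [set e | e \in p] [set e in F | src e == v]) addnC; congr (_ + _).
    by apply: eq_card => e; rewrite !inE andbA.
  apply: eq_card => e; rewrite !inE; case ep: (e \in p); rewrite ?andbF ?andbT //=.
  by rewrite sub.
rewrite -(cardsID [set e | e \in p] [set e in F | dst e == v]) addnC; congr (_ + _).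
  by apply: eq_card => e; rewrite !inE andbA.
apply: eq_card => e; rewrite !inE; case ep: (e \in p); rewrite ?andbF ?andbT //=.
by rewrite sub.
Qed.

Lemma decomp s t : s != t -> forall n F, isflow s t F n ->
  exists Q, [/\ size Q = n, disjoint_paths src dst s t Q & all (fun p => all (fun e => e \in F) p) Q].
Proof.
move=> st; elim=> [|n IH] F fl.
  by exists [::]; split.
pose R := [set v | connect (relF F) s v].
have sR : s \in R by rewrite inE connect0.
have tR : t \in R.
  apply: contraT => tR.
  have := sum_flow fl sR tR.
  have : [set e in F | src e \in R] \subset [set e in F | dst e \in R].
    apply/subsetP => e; rewrite !inE => /andP [eF se]; rewrite eF /=.
    apply: connect_trans se _; apply: connect1; apply/existsP; exists e.
    by rewrite eF !eqxx.
  move/subset_leq_card; slia.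
move: tR; rewrite inE => /connectP [vs0 pvs0 lt].
case: (shortenP pvs0) lt => vs pvs uvs _ lt.
have [p [wp mp ap]] := vpath_to_epath pvs.
rewrite -lt in wp.
have up : uniq (s :: map dst p) by rewrite mp.
pose F' := F :\: [set e | e \in p].
have fl' : isflow s t F' n.
  move=> v vt.
  have [o1 i1] := outc_split v (fun e ep => (allP ap) e ep).
  have [c1 c2] := cnt_path v wp up.
  have := fl v vt; rewrite o1 i1 c1 c2 vt andbT /F'.
  case: (eqVneq v s) => [->|vs'] /=.
    rewrite mem_head /=; move: up => /= /andP [/negbTE -> _]; slia.
  rewrite in_cons (negbTE vs') /=; slia.
have [Q [sQ [aQ pQ] eQ]] := IH F' fl'.
exists (p :: Q); split=> /=.
- by rewrite sQ.
- split=> /=; first by rewrite /st_path wp up aQ.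
  rewrite pQ andbT; apply/allP => q qQ; apply/hasP => [[e ep eq]].
  move/allP: eQ => /(_ q qQ) /allP /(_ e eq); rewrite !inE ep; done.
- rewrite ap /=; apply/allP => q qQ; apply/allP => e eq.
  by move/allP: eQ => /(_ q qQ) /allP /(_ e eq); rewrite !inE => /andP [].
Qed.


Definition res (F : {set E}) : rel V := fun u w =>
  [exists e, ((e \notin F) && (src e == u) && (dst e == w)) ||
             ((e \in F) && (dst e == u) && (src e == w))].

Lemma card_D1P (Q : pred E) (A : {set E}) e : e \in A ->
  #|[set f in A | Q f]| = Q e + #|[set f in A :\ e | Q f]|.
Proof.
move=> eA; rewrite (cardsD1 e) !inE eA /=; congr (_ + _).
by apply: eq_card => f; rewrite !inE andbA.
Qed.

Lemma aug_step F x w : res F x w -> exists F1,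
  (forall v, outc F1 v + inc F v + (w == v) = outc F v + inc F1 v + (x == v)) /\
  (forall u u', u != x -> u' != x -> res F u u' -> res F1 u u').
Proof.
case/existsP => e /orP [/andP [/andP [eF /eqP sx] /eqP dw] | /andP [/andP [eF /eqP dx] /eqP sw]].
  exists (e |: F); split.
    move=> v; rewrite /outc /inc !(card_D1P _ (setU11 e F)) !setU1K //= sx dw; slia.
  move=> u u' ux u'x /existsP [f Hf]; apply/existsP; exists f.
  have fe : f != e.
    apply/negP => /eqP fe; move: Hf; rewrite fe (negbTE eF) sx /= orbF.
    by rewrite eq_sym (negbTE ux).
  by rewrite !inE (negbTE fe).
exists (F :\ e); split.
  move=> v; rewrite /outc /inc !(card_D1P _ eF) sw dx; slia.
move=> u u' ux u'x /existsP [f Hf]; apply/existsP; exists f.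
have fe : f != e.
  apply/negP => /eqP fe; move: Hf; rewrite fe eF dx /=.
  by rewrite eq_sym (negbTE ux).
by rewrite !inE (negbTE fe).
Qed.

Lemma aug t : forall vs x F, path (res F) x vs -> last x vs = t -> uniq (x :: vs) -> vs != [::] ->
  exists F', (forall v, v != x -> v != t -> outc F' v + inc F v = outc F v + inc F' v) /\
             outc F' x + inc F x = outc F x + inc F' x + 1.
Proof.
elim=> [|w vs IH] x F //= /andP [rxw pvs] lt /andP [xN uvs] _.
have [F1 [rel1 sub1]] := aug_step rxw.
have xw : x != w by apply: contraNneq xN => ->; rewrite mem_head.
case: vs IH pvs lt xN uvs => [|w' vs'] IH pvs lt xN uvs.
  move: lt => /= lt; subst w.
  exists F1; split.
    move=> v vx vt; have := rel1 v; rewrite eq_sym (negbTE vt) eq_sym (negbTE vx); slia.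
  have h1 := rel1 x; have h2 : (t == x) = false by rewrite eq_sym (negbTE xw).
  rewrite eqxx h2 in h1; slia.
set vs := w' :: vs' in IH pvs lt xN uvs *.
have pvs1 : path (res F1) w vs.
  have ee : {in (fun u => u != x) &, subrel (res F) (res F1)}.
    by move=> u u' ux u'x; apply: sub1.
  apply: (sub_in_path ee) pvs.
  apply/allP => u; rewrite in_cons => /orP [/eqP ->|uvs']; first by rewrite eq_sym.
  by apply: contraNneq xN => ux; rewrite -ux in_cons uvs' orbT.
have [F' [r1 r2]] := IH w F1 pvs1 lt uvs isT.
have xt : x != t.
  apply: contraNneq xN => ->; rewrite -lt; exact: mem_last.
exists F'; split.
  move=> v vx vt; have := rel1 v; rewrite (eq_sym x v) (negbTE vx).
  case: (eqVneq v w) => [->|vw].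
    by move=> h; have := r2; slia.
  by move=> h; have := r1 v vw vt; slia.
have h1 := rel1 x; have h2 : (w == x) = false by rewrite eq_sym (negbTE xw).
rewrite eqxx h2 in h1; have := r1 x xw xt; slia.
Qed.


Lemma exit_edge (R : {set V}) t : forall p x, walk src dst x t p -> x \in R -> t \notin R ->
  has (fun e => (src e \in R) && (dst e \notin R)) p.
Proof.
elim=> [|e q IH] x /=; first by move=> /eqP -> ->.
case/andP=> /eqP sx wq xR tR; rewrite sx xR /=.
case dR: (dst e \in R) => //=; exact: IH wq dR tR.
Qed.

Lemma menger_cut s t P : s != t -> max_disjoint_paths src dst s t P ->
  exists X, is_cut src dst s t X /\ #|X| <= size P.
Proof.
move=> st [dP maxP].
pose F := FP P.
have fl : isflow s t F (size P) := flow_paths st dP.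
pose R := [set v | connect (res F) s v].
have sR : s \in R by rewrite inE connect0.
case tR: (t \in R).
  move: tR; rewrite inE => /connectP [vs0 pvs0 lt].
  case: (shortenP pvs0) lt => vs pvs uvs _ lt.
  have vsn : vs != [::] by move: lt st; case: vs {pvs uvs} => //= ->; rewrite eqxx.
  have [F' [r1 r2]] := aug pvs (esym lt) uvs vsn.
  have fl' : isflow s t F' (size P).+1.
    move=> v vt; case: (eqVneq v s) => [->|vs'].
      have := fl s st; rewrite eqxx; slia.
    have := fl v vt; rewrite (negbTE vs'); have := r1 v vs' vt; slia.
  have [Q [sQ dQ _]] := decomp st fl'.
  by have := maxP Q dQ; rewrite sQ ltnn.
pose X := [set e in F | (src e \in R) && (dst e \notin R)].
have noin : forall e, e \in F -> dst e \in R -> src e \in R.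
  move=> e eF; rewrite /R !inE => dR; apply: connect_trans dR _; apply: connect1.
  by apply/existsP; exists e; rewrite eF !eqxx orbT.
exists X; split.
  move=> p /andP [wp _]; have := exit_edge wp sR (negbT tR).
  case/hasP => e ep /andP [se de]; apply/hasP; exists e => //.
  rewrite /X inE se de /= !andbT.
  apply: contraT => eF; move: de; case/negP.
  move: se; rewrite /R !inE => se; apply: connect_trans se _; apply: connect1.
  by apply/existsP; exists e; rewrite eF !eqxx.
have := sum_flow fl sR (negbT tR).
have -> : X = [set e in F | src e \in R] :\: [set e in F | dst e \in R].
  apply/setP => e; rewrite !inE.
  by case: (has _ P); case: (connect _ s (src e)); case: (connect _ s (dst e)).
rewrite cardsD.
have -> : [set e in F | src e \in R] :&: [set e in F | dst e \in R] = [set e in F | dst e \in R].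
  apply/setIidPr/subsetP => e; rewrite inE => /andP [eF dR]; by rewrite inE eF (noin e eF dR).
slia.
Qed.


Lemma hits (C : {set E}) P :
  pairwise (fun p q => ~~ has (fun e => e \in q) p) P ->
  (forall p, p \in P -> has (fun e => e \in C) p) ->
  size P <= #|[set e in FP P | e \in C]| /\
  (forall p0 f g, p0 \in P -> f \in p0 -> g \in p0 -> f \in C -> g \in C -> f != g ->
     size P < #|[set e in FP P | e \in C]|).
Proof.
elim: P => [|p P IH] /=.
  by move=> _ _; split=> // p0 f g.
case/andP=> dis pw hC.
have [IH1 IH2] := IH pw (fun q qP => hC q (@mem_behead _ (p :: P) q qP)).
have h1 : 0 < #|[set e | (e \in p) && (e \in C)]|.
  case/hasP: (hC p (mem_head _ _)) => e ep eC.
  by apply/card_gt0P; exists e; rewrite inE ep eC.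
rewrite card_split //=; split; first exact: (leq_add h1 IH1).
move=> p0 f g; rewrite in_cons => /orP [/eqP ->|p0P] fp gp fC gC fg.
  have H : 1 < #|[set e | (e \in p) && (e \in C)]|.
    have c2 : 1 < #|[set f; g]| by rewrite cards2 fg.
    apply: leq_trans c2 _; apply: subset_leq_card; apply/subsetP => x.
    by rewrite !inE => /orP [/eqP ->|/eqP ->]; rewrite ?fp ?gp ?fC ?gC.
  exact: (leq_add H IH1).
exact: (leq_add h1 (IH2 p0 f g p0P fp gp fC gC fg)).
Qed.

Lemma exactly_once s t P C : s != t -> max_disjoint_paths src dst s t P ->
  min_cut src dst s t C -> forall p f g, p \in P -> f \in p -> g \in p -> f \in C -> g \in C -> f = g.
Proof.
move=> st mP [cC minC] p f g pP fp gp fC gC.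
have [X [cX sX]] := menger_cut st mP.
have := minC X cX => CX.
case: mP => [[aP pwP] _].
have hC : forall q, q \in P -> has (fun e => e \in C) q.
  by move=> q qP; apply: cC; move/allP: aP; apply.
have [_ h2] := hits pwP hC.
apply/eqP; apply: contraT => fg.
have := h2 p f g pP fp gp fC gC fg.
have : #|[set e in FP P | e \in C]| <= #|C|.
  by apply: subset_leq_card; apply/subsetP => x; rewrite inE => /andP [].
move=> H1 H2; have := leq_trans H2 (leq_trans H1 (leq_trans CX sX)); by rewrite ltnn.
Qed.

Lemma same_path (P : seq (seq E)) (p q : seq E) (e : E) : pairwise (fun p q => ~~ has (fun e => e \in q) p) P ->
  p \in P -> q \in P -> e \in p -> e \in q -> p = q.
Proof.
elim: P => [|x P IH] //= /andP [dis pw].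
rewrite !in_cons => /orP [/eqP ->|pP] /orP [/eqP ->|qP] ep eq //.
- move/allP: dis => /(_ q qP) /hasP []; by exists e.
- move/allP: dis => /(_ p pP) /hasP []; by exists e.
- exact: IH.
Qed.

Lemma in_drop_uniq (T : eqType) (p : seq T) n f : uniq p -> f \in drop n p -> n <= index f p.
Proof.
move=> up fd.
have fp : f \in p := mem_drop fd.
rewrite leqNgt -in_take //.
move: up; rewrite -{1}(cat_take_drop n p) cat_uniq => /and3P [_ /hasPn H _].
by apply/negP => ft; have := H f fd; rewrite /= ft.
Qed.

Lemma nth_in_drop (T : eqType) (x0 : T) (p : seq T) n j : n <= j -> j < size p -> nth x0 p j \in drop n p.
Proof.
move=> nj jp; have -> : nth x0 p j = nth x0 (drop n p) (j - n) by rewrite nth_drop subnKC.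
by apply: mem_nth; rewrite size_drop; slia.
Qed.

End Menger.

Theorem claim1 (V E : finType) (src dst : E -> V) (s t : V) (k : nat)
  (P : seq (seq E)) (C1 C2 : 'I_k -> {set E}) (e : E) :
  1 <= k ->
  max_disjoint_paths src dst s t P ->
  U_lr src dst s t C1 -> U_lr src dst s t C2 ->
  Be e (Ljoin P C1 C2) + Be e (Lmeet P C1 C2) <= Be e C1 + Be e C2.
Proof.
move=> k1 mP [m1 o1] [m2 o2].
have st : s != t.
  apply/negP => /eqP st; case: (m1 (Ordinal k1)) => cC _.
  have := cC [::]; rewrite /st_path /= st eqxx /=; by move=> /(_ isT).
case: (mP) => [[aP pwP] _].
case: (boolP (has (fun p => e \in p) P)) => [/hasP [p pP ep] | nP]; last first.
  have zJ : mu e (Ljoin P C1 C2) = 0.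
    apply: eq_card0 => i; rewrite !inE /Ljoin /Smax ?inE.
    apply/negbTE/hasP => [[q qP /and3P [eq _ _]]].
    by case/hasP: nP; exists q.
  have zM : mu e (Lmeet P C1 C2) = 0.
    apply: eq_card0 => i; rewrite !inE /Lmeet /Smin ?inE.
    apply/negbTE/hasP => [[q qP /and3P [eq _ _]]].
    by case/hasP: nP; exists q.
  by rewrite /Be zJ zM.
have stp : st_path src dst s t p := allP aP p pP.
have up : uniq p.
  by move: stp => /andP [_ /= /andP [_ /map_uniq]].
have G : forall X, min_cut src dst s t X ->
   [/\ find (fun f => f \in X) p < size p,
       nth e p (find (fun f => f \in X) p) \in X &
       forall f, f \in p -> (f \in X) = (index f p == find (fun f => f \in X) p)].
  move=> X mX; have hX : has (fun f => f \in X) p := mX.1 p stp.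
  have fs : find (fun f => f \in X) p < size p by rewrite -has_find.
  have nX := nth_find e hX.
  split=> // f fp; apply/idP/eqP => [fX | fi].
    have := exactly_once st mP mX pP fp (mem_nth e fs) fX nX => ->.
    by rewrite index_uniq.
  by rewrite -(nth_index e fp) fi.
pose a i := find (fun f => f \in C1 i) p.
pose b i := find (fun f => f \in C2 i) p.
set r := index e p.
have Ga : forall i, [/\ a i < size p, nth e p (a i) \in C1 i &
   forall f, f \in p -> (f \in C1 i) = (index f p == a i)] := fun i => G _ (m1 i).
have Gb : forall i, [/\ b i < size p, nth e p (b i) \in C2 i &
   forall f, f \in p -> (f \in C2 i) = (index f p == b i)] := fun i => G _ (m2 i).
have monoa : forall i j : 'I_k, i <= j -> a i <= a j.
  move=> i j; rewrite leq_eqVlt => /orP [/eqP/val_inj -> // | ij].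
  have [x [y [xC yC xp yp ixy]]] := o1 i j ij p stp.
  have [_ _ Hi] := Ga i; have [_ _ Hj] := Ga j.
  by move: xC yC; rewrite (Hi x xp) (Hj y yp) => /eqP <- /eqP <-.
have monob : forall i j : 'I_k, i <= j -> b i <= b j.
  move=> i j; rewrite leq_eqVlt => /orP [/eqP/val_inj -> // | ij].
  have [x [y [xC yC xp yp ixy]]] := o2 i j ij p stp.
  have [_ _ Hi] := Gb i; have [_ _ Hj] := Gb j.
  by move: xC yC; rewrite (Hi x xp) (Hj y yp) => /eqP <- /eqP <-.
have eC1 : forall i, (e \in C1 i) = (r == a i) by move=> i; have [_ _ H] := Ga i; exact: H.
have eC2 : forall i, (e \in C2 i) = (r == b i) by move=> i; have [_ _ H] := Gb i; exact: H.
have eJ : forall i, (e \in Ljoin P C1 C2 i) =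
    ((r == a i) || (r == b i)) && ~~ ((r < a i) || (r < b i)).
  move=> i; rewrite /Ljoin /Smax inE.
  have -> : has (fun q => last_in (C1 i :|: C2 i) q e) P = last_in (C1 i :|: C2 i) p e.
    apply/hasP/idP => [[q qP lq] | lp]; last by exists p.
    have eq : e \in q by case/and3P: lq.
    by rewrite (same_path pwP pP qP ep eq).
  rewrite /last_in ep inE eC1 eC2 /= -/r; congr (_ && ~~ _).
  have [sa na Ha] := Ga i; have [sb nb Hb] := Gb i.
  apply/hasP/orP => [[f fd]|[h|h]].
  - have fp := mem_drop fd; have := in_drop_uniq up fd.
    by rewrite inE (Ha f fp) (Hb f fp) => H /orP [/eqP <-|/eqP <-]; [left|right].
  - by exists (nth e p (a i)); [exact: nth_in_drop | rewrite inE na].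
  - by exists (nth e p (b i)); [exact: nth_in_drop | rewrite inE nb orbT].
have eM : forall i, (e \in Lmeet P C1 C2 i) =
    ((r == a i) || (r == b i)) && ~~ ((a i < r) || (b i < r)).
  move=> i; rewrite /Lmeet /Smin inE.
  have -> : has (fun q => first_in (C1 i :|: C2 i) q e) P = first_in (C1 i :|: C2 i) p e.
    apply/hasP/idP => [[q qP lq] | lp]; last by exists p.
    have eq : e \in q by case/and3P: lq.
    by rewrite (same_path pwP pP qP ep eq).
  rewrite /first_in ep inE eC1 eC2 /= -/r; congr (_ && ~~ _).
  have [sa na Ha] := Ga i; have [sb nb Hb] := Gb i.
  apply/hasP/orP => [[f fd]|[h|h]].
  - have fp := mem_take fd; move: fd; rewrite (in_take _ fp).
    by rewrite inE (Ha f fp) (Hb f fp) => H /orP [/eqP <-|/eqP <-]; [left|right].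
  - exists (nth e p (a i)); last by rewrite inE na.
    by rewrite in_take ?mem_nth // index_uniq.
  - exists (nth e p (b i)); last by rewrite inE nb orbT.
    by rewrite in_take ?mem_nth // index_uniq.
pose Ha := [set i | a i <= r]. pose La := [set i | a i < r].
pose Hb := [set i | b i <= r]. pose Lb := [set i | b i < r].
have mu1 : mu e C1 = #|Ha :\: La|.
  apply: eq_card => i; rewrite !inE eC1; by case: (ltngtP (a i) r).
have mu2 : mu e C2 = #|Hb :\: Lb|.
  apply: eq_card => i; rewrite !inE eC2; by case: (ltngtP (b i) r).
have muJ : mu e (Ljoin P C1 C2) = #|(Ha :&: Hb) :\: (La :&: Lb)|.
  apply: eq_card => i; rewrite [in LHS]inE eJ !inE; by case: (ltngtP (a i) r); case: (ltngtP (b i) r).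
have muM : mu e (Lmeet P C1 C2) = #|(Ha :|: Hb) :\: (La :|: Lb)|.
  apply: eq_card => i; rewrite [in LHS]inE eM !inE; by case: (ltngtP (a i) r); case: (ltngtP (b i) r).
rewrite /Be muJ muM mu1 mu2; apply: key.
- by apply/subsetP => i; rewrite /Ha /La /Hb /Lb !inE; apply: ltnW.
- by apply/subsetP => i; rewrite /Ha /La /Hb /Lb !inE; apply: ltnW.
- apply: nested_dc => i j ij; rewrite /Ha /La /Hb /Lb !inE => h.
  + exact: leq_trans (monoa i j ij) h.
  + exact: leq_trans (monob i j ij) h.
- apply: nested_dc => i j ij; rewrite /Ha /La /Hb /Lb !inE => h.
  + exact: leq_ltn_trans (monoa i j ij) h.
  + exact: leq_ltn_trans (monob i j ij) h.
Qed.
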